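(* For every integer $q\ge2$ there exists a constant $c_6>0$ depending only on $q$ such that for every positive integer $k$ there exists a positive integer $n\le \exp(c_6k)$ with $s_q(kn)=k$. Consequently, for every $k\ge1$ the number $a_k$ (in base $q$) exists and $a_k=\exp(O_q(k))$.
   Context: For an integer base $q\ge2$, $s_q(m)$ denotes the sum of the base-$q$ digits of the nonnegative integer $m$, and $a_k$ denotes the smallest positive multiple of $k$ with $s_q(a_k)=k$. *)

(* Defs.v *)
From Stdlib Require Import Reals Arith Lia.

(* Base-q digit sum, computed with fuel; fuel m suffices since m / q < m
   for q >= 2 and m > 0. *)
Fixpoint digsum_aux (fuel q m : nat) : nat :=
  match fuel with
  | O => O
  | S f => if Nat.eqb m 0 then O else Nat.modulo m q + digsum_aux f q (Nat.div m q)
  end.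

Definition s_q (q m : nat) : nat := digsum_aux m q m.

Definition is_a_k (q k a : nat) : Prop :=
  0 < a /\ Nat.divide k a /\ s_q q a = k /\
  (forall b, 0 < b -> Nat.divide k b -> s_q q b = k -> a <= b).

(* Main.v *)
Require Import Defs.
From Stdlib Require Import Reals Arith Lia Lra List Classical.

Section S.
Variable q : nat.
Hypothesis hq : 2 <= q.

Lemma aux_fuel : forall f1 f2 m, m <= f1 -> m <= f2 ->
  digsum_aux f1 q m = digsum_aux f2 q m.
Proof.
  induction f1 as [|f1 IH]; intros f2 m h1 h2.
  - assert (m = 0) by lia. subst. destruct f2; reflexivity.
  - destruct f2 as [|f2].
    + assert (m = 0) by lia. subst. reflexivity.
    + simpl. destruct (Nat.eqb m 0) eqn:E; [reflexivity|].
      apply Nat.eqb_neq in E.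
      assert (m / q < m) by (apply Nat.div_lt; lia).
      f_equal. apply IH; lia.
Qed.

Lemma s0 : s_q q 0 = 0.
Proof. reflexivity. Qed.

Lemma s_unfold m : m <> 0 -> s_q q m = m mod q + s_q q (m / q).
Proof.
  intros hm. unfold s_q. destruct m as [|m]; [lia|].
  change (digsum_aux (S m) q (S m)) with
    (if Nat.eqb (S m) 0 then 0 else Nat.modulo (S m) q + digsum_aux m q (Nat.div (S m) q)).
  simpl Nat.eqb. cbv iota. f_equal. apply aux_fuel.
  - assert (S m / q < S m) by (apply Nat.div_lt; lia). lia.
  - lia.
Qed.

Lemma s_digit x d : d < q -> s_q q (d + q * x) = d + s_q q x.
Proof.
  intros hd. destruct (Nat.eq_dec (d + q * x) 0) as [E|E].
  - assert (d = 0) by lia. assert (x = 0) by nia. subst. rewrite Nat.mul_0_r. reflexivity.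
  - rewrite s_unfold by exact E.
    rewrite (Nat.mul_comm q x), Nat.Div0.mod_add, Nat.mod_small by lia.
    rewrite Nat.div_add by lia. rewrite Nat.div_small by lia. reflexivity.
Qed.

Lemma s_le m : s_q q m <= m.
Proof.
  induction m as [m IH] using lt_wf_ind.
  destruct (Nat.eq_dec m 0) as [->|E]; [rewrite s0; lia|].
  rewrite s_unfold by exact E.
  assert (m / q < m) by (apply Nat.div_lt; lia).
  specialize (IH _ H). pose proof (Nat.div_mod_eq m q). nia.
Qed.

Lemma s_cong m : exists M, m = s_q q m + (q - 1) * M.
Proof.
  induction m as [m IH] using lt_wf_ind.
  destruct (Nat.eq_dec m 0) as [->|E]; [exists 0; rewrite s0; lia|].
  rewrite s_unfold by exact E.
  assert (m / q < m) by (apply Nat.div_lt; lia).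
  destruct (IH _ H) as [M' HM]. exists (M' + m / q).
  pose proof (Nat.div_mod_eq m q). nia.
Qed.

Lemma s_concat j : forall A B, B < q ^ j -> s_q q (B + q ^ j * A) = s_q q B + s_q q A.
Proof.
  induction j as [|j IH]; intros A B hB.
  - simpl in hB. assert (B = 0) by lia. subst. simpl. rewrite Nat.add_0_r. reflexivity.
  - pose proof (Nat.div_mod_eq B q) as HB.
    assert (Hm : B mod q < q) by (apply Nat.mod_upper_bound; lia).
    assert (Hd : B / q < q ^ j).
    { apply Nat.Div0.div_lt_upper_bound. simpl in hB. lia. }
    replace (B + q ^ S j * A) with (B mod q + q * (B / q + q ^ j * A))
      by (simpl; nia).
    rewrite s_digit by exact Hm. rewrite IH by exact Hd.
    assert (sB : s_q q B = B mod q + s_q q (B / q)).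
    { rewrite <- s_digit by exact Hm. f_equal. lia. }
    lia.
Qed.

Lemma qpow_pos j : 1 <= q ^ j.
Proof. pose proof (Nat.pow_le_mono_l 1 q j). rewrite Nat.pow_1_l in H. lia. Qed.

Lemma s_compl L : forall y, y < q ^ L -> s_q q (q ^ L - 1 - y) + s_q q y = L * (q - 1).
Proof.
  induction L as [|L IH]; intros y hy.
  - simpl in hy. assert (y = 0) by lia. subst. reflexivity.
  - pose proof (Nat.div_mod_eq y q) as Hy.
    assert (Hm : y mod q < q) by (apply Nat.mod_upper_bound; lia).
    assert (Hd : y / q < q ^ L).
    { apply Nat.Div0.div_lt_upper_bound. simpl in hy. lia. }
    set (P := q ^ L) in *. set (d := y mod q) in *. set (y' := y / q) in *.
    replace (q ^ S L - 1 - y) with ((q - 1 - d) + q * (P - 1 - y'))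
      by (simpl; fold P; nia).
    rewrite s_digit by lia.
    assert (sY : s_q q y = d + s_q q y').
    { rewrite <- s_digit by exact Hm. f_equal. lia. }
    rewrite sY. specialize (IH _ Hd). nia.
Qed.

Lemma s_rep L m : 1 <= m -> m <= q ^ L -> s_q q (m * (q ^ L - 1)) = L * (q - 1).
Proof.
  intros h1 h2.
  replace (m * (q ^ L - 1)) with ((q ^ L - 1 - (m - 1)) + q ^ L * (m - 1)) by nia.
  rewrite s_concat by lia. apply s_compl. lia.
Qed.

Lemma s_shift a X : s_q q (q ^ a * X) = s_q q X.
Proof.
  pose proof (s_concat a X 0 (qpow_pos a)). rewrite Nat.add_0_l in H. exact H.
Qed.

End S.

Lemma pigeon q k : 1 <= k -> exists a t, 1 <= t /\ a + t <= k /\ (q ^ (a + t)) mod k = (q ^ a) mod k.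
Proof.
  intros hk. apply NNPP. intros H.
  set (f := fun i => (q ^ i) mod k).
  assert (ND : NoDup (map f (seq 0 (S k)))).
  { apply NoDup_map_NoDup_ForallPairs; [| apply seq_NoDup].
    intros x y Hx Hy Hf. apply in_seq in Hx, Hy. unfold f in Hf.
    destruct (lt_eq_lt_dec x y) as [[l|e]|l]; auto; exfalso; apply H.
    - exists x, (y - x). replace (x + (y - x)) with y by lia. split; [lia|split;[lia|auto]].
    - exists y, (x - y). replace (y + (x - y)) with x by lia. split; [lia|split;[lia|auto]]. }
  assert (I : incl (map f (seq 0 (S k))) (seq 0 k)).
  { intros z Hz. apply in_map_iff in Hz as [i [<- _]]. apply in_seq. unfold f.
    pose proof (Nat.mod_upper_bound (q ^ i) k). lia. }
  pose proof (NoDup_incl_length ND I). rewrite length_map, !length_seq in H0. lia.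
Qed.

Fixpoint G (q t i : nat) : nat :=
  match i with O => O | S i => 1 + q ^ t * G q t i end.

Lemma G_s q t i : 2 <= q -> 1 <= t -> s_q q (G q t i) = i.
Proof.
  intros hq ht. induction i as [|i IH]; [reflexivity|].
  change (G q t (S i)) with (1 + q ^ t * G q t i). assert (1 < q ^ t).
  { pose proof (Nat.pow_le_mono_r q 1 t ltac:(lia) ht). simpl in H. lia. }
  rewrite s_concat by lia. rewrite IH.
  pose proof (s_digit q hq 0 1 ltac:(lia)) as H1. rewrite Nat.mul_0_r, Nat.add_0_r, s0 in H1. rewrite H1. reflexivity.
Qed.

Lemma G_bound q t i : 2 <= q -> 1 <= t -> G q t i + 1 <= q ^ (t * i).
Proof.
  intros hq ht. induction i as [|i IH]; [rewrite Nat.mul_0_r; simpl; lia|].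
  change (G q t (S i)) with (1 + q ^ t * G q t i). rewrite Nat.mul_succ_r, Nat.pow_add_r.
  assert (2 <= q ^ t).
  { pose proof (Nat.pow_le_mono_r q 1 t ltac:(lia) ht). simpl in H. lia. }
  set (X := q ^ t) in *. set (Y := q ^ (t * i)) in *.
  assert (X * (G q t i + 1) <= X * Y) by (apply Nat.mul_le_mono_l; exact IH).
  nia.
Qed.

Lemma G_mod q t a k i : k <> 0 -> (q ^ (a + t)) mod k = (q ^ a) mod k ->
  (q ^ a * G q t i) mod k = (i * q ^ a) mod k.
Proof.
  intros hk hp. induction i as [|i IH].
  - simpl. rewrite Nat.mul_0_r. reflexivity.
  - change (G q t (S i)) with (1 + q ^ t * G q t i).
    replace (q ^ a * (1 + q ^ t * G q t i)) with (q ^ a + q ^ (a + t) * G q t i)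
      by (rewrite Nat.pow_add_r; ring).
    replace (S i * q ^ a) with (q ^ a + i * q ^ a) by ring.
    rewrite (Nat.Div0.add_mod (q ^ a) (q ^ (a + t) * G q t i)).
    rewrite <- Nat.Div0.mul_mod_idemp_l, hp, Nat.Div0.mul_mod_idemp_l, IH.
    rewrite <- Nat.Div0.add_mod. reflexivity.
Qed.

Lemma powlin q x : 2 <= q -> 3 <= x -> q * (x + 1) <= q ^ x.
Proof.
  intros hq hx. induction x as [|x IH]; [lia|].
  destruct (Nat.eq_dec x 2) as [->|E].
  - simpl. nia.
  - assert (q * (x + 1) <= q ^ x) by (apply IH; lia).
    rewrite Nat.pow_succ_r'. nia.
Qed.

Lemma exist_n q k : 2 <= q -> 1 <= k ->
  exists n, 1 <= n /\ n <= q ^ ((3 * q + 2) * k) /\ s_q q (k * n) = k.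
Proof.
  intros hq hk.
  assert (Hmono : forall e, e <= (3 * q + 2) * k -> q ^ e <= q ^ ((3 * q + 2) * k))
    by (intros e he; apply Nat.pow_le_mono_r; lia).
  destruct (s_cong q hq k) as [M HM].
  pose proof (s_le q hq k) as Hsk.
  destruct (Nat.eq_dec M 0) as [->|HM0].
  { exists 1. split; [lia|split].
    - pose proof (qpow_pos q hq ((3 * q + 2) * k)). lia.
    - rewrite Nat.mul_1_r. lia. }
  destruct (le_lt_dec k (q ^ M)) as [Hgood|Hbad].
  - exists (1 + q ^ k * (q ^ M - 1)).
    assert (HkM : M <= k) by (assert (1 * M <= (q - 1) * M) by (apply Nat.mul_le_mono_r; lia); lia).
    pose proof (qpow_pos q hq k). pose proof (qpow_pos q hq M).
    split; [apply Nat.le_add_r|split].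
    + apply Nat.le_trans with (q ^ (k + M)); [|apply Hmono; lia].
      rewrite Nat.pow_add_r. nia.
    + replace (k * (1 + q ^ k * (q ^ M - 1))) with (k + q ^ k * (k * (q ^ M - 1))) by ring.
      rewrite s_concat by (try apply Nat.pow_gt_lin_r; lia).
      rewrite s_rep by lia. lia.
  -
    assert (Hk3 : k < 3 * q).
    { set (x := k / q).
      pose proof (Nat.div_mod_eq k q) as Hd.
      pose proof (Nat.mod_upper_bound k q ltac:(lia)) as Hr.
      rewrite (s_unfold q hq k ltac:(lia)) in HM.
      pose proof (s_le q hq x).
      fold x in Hd, HM.
      assert (Hqx : (q - 1) * x <= (q - 1) * M).
      { replace ((q - 1) * x) with (q * x - x) by (rewrite Nat.mul_sub_distr_r; lia). clearbody x. generalize dependent ((q - 1) * M). intros. lia. }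
      assert (HMx : x <= M).
      { destruct (le_lt_dec x M) as [h|h]; [exact h|].
        assert ((q - 1) * M < (q - 1) * x) by (apply Nat.mul_lt_mono_pos_l; lia). lia. }
      assert (q ^ x <= q ^ M) by (apply Nat.pow_le_mono_r; lia).
      destruct (le_lt_dec 3 x) as [h3|h3].
      + pose proof (powlin q x hq h3). nia.
      + nia. }
    destruct (pigeon q k hk) as [a [t [ht [hat hp]]]].
    set (N := q ^ a * G q t k).
    assert (HN : N mod k = 0).
    { unfold N. rewrite (G_mod q t a k k ltac:(lia) hp). rewrite Nat.mul_comm; apply Nat.Div0.mod_mul. }
    apply Nat.Lcm0.mod_divide in HN. destruct HN as [n Hn].
    assert (HsN : s_q q N = k) by (unfold N; rewrite s_shift by lia; apply G_s; lia).
    assert (HNk : k * n = N) by lia.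
    exists n. split; [|split].
    + destruct n; [|lia]. rewrite Nat.mul_0_r in HNk. rewrite <- HNk, s0 in HsN. lia.
    + assert (n <= N) by (rewrite <- HNk; destruct n; nia).
      pose proof (G_bound q t k hq ht).
      assert (q ^ (t * k) <= q ^ (k * k)) by (apply Nat.pow_le_mono_r; nia).
      assert (q ^ a <= q ^ k) by (apply Nat.pow_le_mono_r; lia).
      assert (N <= q ^ (k + k * k)).
      { unfold N. rewrite Nat.pow_add_r. nia. }
      apply Nat.le_trans with (q ^ (k + k * k)); [lia|]. apply Hmono. nia.
    + rewrite HNk. exact HsN.
Qed.

Lemma least (P : nat -> Prop) m : P m -> exists a, P a /\ forall b, P b -> a <= b.
Proof.
  induction m as [m IH] using lt_wf_ind. intros Pm.
  destruct (classic (exists b, b < m /\ P b)) as [[b [hb Pb]]|Hn].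
  - exact (IH b hb Pb).
  - exists m. split; [exact Pm|]. intros b Pb.
    destruct (le_lt_dec m b) as [h|h]; [exact h|]. exfalso. apply Hn. eauto.
Qed.

Lemma pow_exp q E : 2 <= q -> INR (q ^ E) = exp (INR E * ln (INR q)).
Proof.
  intros hq. rewrite pow_INR. rewrite <- Rpower_pow.
  - reflexivity.
  - apply lt_0_INR. lia.
Qed.

Lemma lnq_pos q : 2 <= q -> (0 < ln (INR q))%R.
Proof.
  intros hq. rewrite <- ln_1. apply ln_increasing; [lra|].
  replace 1%R with (INR 1) by reflexivity. apply lt_INR. lia.
Qed.

Theorem mainTheorem14 (q : nat) (hq : 2 <= q) :
  (exists c6 : R, (0 < c6)%R /\
     forall k : nat, 1 <= k ->
       exists n : nat, 1 <= n /\ (INR n <= exp (c6 * INR k))%R /\ s_q q (k * n) = k)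
  /\
  (exists C : R, (0 < C)%R /\
     forall k : nat, 1 <= k ->
       exists a : nat, is_a_k q k a /\ (INR a <= exp (C * INR k))%R).
Proof.
  pose proof (lnq_pos q hq) as Hl.
  split.
  - exists (INR (3 * q + 2) * ln (INR q))%R. split.
    + apply Rmult_lt_0_compat; [apply lt_0_INR; lia|exact Hl].
    + intros k hk. destruct (exist_n q k hq hk) as [n [h1 [h2 h3]]].
      exists n. split; [exact h1|split; [|exact h3]].
      apply Rle_trans with (INR (q ^ ((3 * q + 2) * k))); [apply le_INR; exact h2|].
      rewrite pow_exp by exact hq. rewrite mult_INR.
      right. f_equal. ring.
  - exists (INR (3 * q + 3) * ln (INR q))%R. split.
    + apply Rmult_lt_0_compat; [apply lt_0_INR; lia|exact Hl].
    + intros k hk. destruct (exist_n q k hq hk) as [n [h1 [h2 h3]]].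
      destruct (least (fun b => 0 < b /\ Nat.divide k b /\ s_q q b = k) (k * n))
        as [a [[ha1 [ha2 ha3]] ha4]].
      { split; [nia|split; [exists n; ring|exact h3]]. }
      exists a. split.
      * split; [exact ha1|split; [exact ha2|split; [exact ha3|]]].
        intros b hb1 hb2 hb3. apply ha4. auto.
      * assert (Ha : a <= q ^ ((3 * q + 3) * k)).
        { assert (a <= k * n) by (apply ha4; split; [nia|split; [exists n; ring|exact h3]]).
          pose proof (Nat.pow_gt_lin_r q k ltac:(lia)).
          replace ((3 * q + 3) * k) with (k + (3 * q + 2) * k) by ring.
          rewrite Nat.pow_add_r. nia. }
        apply Rle_trans with (INR (q ^ ((3 * q + 3) * k))); [apply le_INR; exact Ha|].
        rewrite pow_exp by exact hq. rewrite mult_INR.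
        right. f_equal. ring.
Qed.
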